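(* Let $m\ge1$, $n>1$ be integers and $1\le l<(n-1)/2$. If $(x,y,z)\in\mathbb{C}^3$ satisfies $v(x,y,z)=2\cos\frac{2l\pi}{n-1}$ and $S_m(z)-vS_{m-1}(z)=0$, then $v=2\cos\frac{2l\pi}{n-1}\in\mathbb{R}$ and $$z=-v^3+v^2xy-v(x^2+y^2-3)+xy.$$ Hence the set of such points contains no point of the form $(2,2,z)$ with $z\notin\mathbb{R}$.
   Context: $S_k(q)$ are the Chebyshev polynomials defined for all integers $k$ by $S_0=1$, $S_1=q$, $S_{k+1}=qS_k-S_{k-1}$. Here $v(x,y,z)=\big(xS_m(z)-yS_{m-1}(z)\big)\big(yS_m(z)-xS_{m-1}(z)\big)-z\big(S_m^2(z)+S_{m-1}^2(z)\big)+4S_m(z)S_{m-1}(z)$. *)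

(* Defs.v *)
From HB Require Import structures.
From mathcomp Require Import all_boot all_order all_algebra.
From mathcomp Require Import complex.
From mathcomp Require Import reals trigo.
Set Implicit Arguments. Unset Strict Implicit. Unset Printing Implicit Defensive.
Import Order.TTheory GRing.Theory Num.Theory.
Local Open Scope ring_scope.

(* Chebyshev polynomials S_0 = 1, S_1 = q, S_{k+1} = q S_k - S_{k-1}
   (only nonnegative indices are needed: m >= 1). *)
Fixpoint cheb {R : pzRingType} (k : nat) (q : R) : R :=
  match k with
  | 0%N => 1
  | k'.+1 => match k' with
             | 0%N => q
             | k''.+1 => q * cheb k' q - cheb k'' q
             end
  end.

Definition vfun {R : comPzRingType} (m : nat) (x y z : R) : R :=
  (x * cheb m z - y * cheb m.-1 z) * (y * cheb m z - x * cheb m.-1 z)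
  - z * (cheb m z ^+ 2 + cheb m.-1 z ^+ 2) + 4 * cheb m z * cheb m.-1 z.

(* Main.v *)
Require Import Defs.
From HB Require Import structures.
From mathcomp Require Import all_boot all_order all_algebra.
From mathcomp Require Import complex.
From mathcomp Require Import reals trigo.
From mathcomp Require Import ring.
Import Order.TTheory GRing.Theory Num.Theory.
Local Open Scope ring_scope.
Local Open Scope complex_scope.

Lemma cheb_cassini (R : comPzRingType) (k : nat) (z : R) :
  cheb k.+1 z ^+ 2 - z * cheb k.+1 z * cheb k z + cheb k z ^+ 2 = 1.
Proof.
elim: k => [|k IH]; first by rewrite /= expr2 mulr1; ring.
rewrite -IH.
have -> : cheb k.+2 z = z * cheb k.+1 z - cheb k z by [].
ring.
Qed.

Theorem lemma4p13 (R : realType) (m n l : nat) (x y z : R[i]) :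
  (1 <= m)%N -> (1 < n)%N -> (1 <= l)%N -> (l.*2 < n.-1)%N ->
  vfun m x y z = (2 * cos (2 * l%:R * pi / (n.-1)%:R))%:C ->
  cheb m z - vfun m x y z * cheb m.-1 z = 0 ->
  vfun m x y z = (2 * cos (2 * l%:R * pi / (n.-1)%:R))%:C /\
  vfun m x y z \is Num.real /\
  z = - vfun m x y z ^+ 3 + vfun m x y z ^+ 2 * x * y
      - vfun m x y z * (x ^+ 2 + y ^+ 2 - 3) + x * y /\
  (x = 2 -> y = 2 -> z \is Num.real).
Proof.
case: m => [//|k] _ _ _ _ hv hc.
have vreal : vfun k.+1 x y z \is Num.real.
  by rewrite hv; apply/complex_realP; eexists.
set v := vfun k.+1 x y z in hv hc vreal *.
have hz : z = - v ^+ 3 + v ^+ 2 * x * y - v * (x ^+ 2 + y ^+ 2 - 3) + x * y.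
  have E0 := @cheb_cassini _ k z.
  rewrite /= in hc.
  set a := cheb k.+1 z in hc E0.
  set b := cheb k z in hc E0.
  have ha : a = v * b by apply/eqP; rewrite -subr_eq0 hc.
  have E2 : v = (x * a - y * b) * (y * a - x * b)
      - z * (a ^+ 2 + b ^+ 2) + 4 * a * b by [].
  rewrite ha in E0 E2.
  set c := b ^+ 2.
  set D := v ^+ 2 + 1 - z * v.
  have e1 : c * D - 1 = 0 by rewrite -E0 /c /D; ring.
  set P := (x * v - y) * (y * v - x) + 4 * v.
  have e2 : c * P - z * c * (v ^+ 2 + 1) - v = 0.
    by apply/eqP; rewrite subr_eq0; apply/eqP; rewrite [RHS]E2 /c /P; ring.
  set Q := - v ^+ 3 + v ^+ 2 * x * y - v * (x ^+ 2 + y ^+ 2 - 3) + x * y.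
  have e3 : c * (z - Q) = v * (c * D - 1) - (c * P - z * c * (v ^+ 2 + 1) - v).
    by rewrite /Q /D /P; ring.
  rewrite e1 e2 mulr0 subr0 in e3.
  apply/eqP; rewrite -subr_eq0; apply/eqP.
  have -> : z - Q = (c * D) * (z - Q) by rewrite (subr0_eq e1) mul1r.
  by rewrite -mulrA mulrCA e3 mulr0.
split; first exact: hv.
split; first exact: vreal.
split; first exact: hz.
move=> hx hy; clearbody v; rewrite hz hx hy.
have r2 : (2 : R[i]) \is Num.real by exact: rpred_nat.
have r3 : (3 : R[i]) \is Num.real by exact: rpred_nat.
apply: rpredD; last exact: rpredM.
apply: rpredB; last by apply: rpredM => //; apply: rpredB => //; apply: rpredD; apply: rpredX.
apply: rpredD; first by rewrite rpredN; apply: rpredX.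
by apply: rpredM => //; apply: rpredM => //; apply: rpredX.
Qed.
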